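(* Let $\mathfrak F$ be a saturated formation and $G=PT$, where $P$ is a normal $p$-subgroup of $G$ and $T\le G$. If $P\cap Z_{\mathfrak F}(T)$ is normal in $P$, then $P\cap Z_{\mathfrak F}(T)\le Z_{\mathfrak F}(G)$.
   Context: All groups are finite, $p$ a prime. For a class $\mathfrak F$, a chief factor $H/K$ of $G$ is $\mathfrak F$-central if $(H/K)\rtimes(G/C_G(H/K))\in\mathfrak F$; $Z_{\mathfrak F}(G)$ is the product of all normal subgroups $N$ of $G$ such that every chief factor of $G$ below $N$ is $\mathfrak F$-central in $G$. *)

(* Defs.v *)
From HB Require Import structures.
From mathcomp Require Import all_boot all_fingroup all_solvable.
From Stdlib Require Import ClassicalEpsilon.

Set Implicit Arguments.
Unset Strict Implicit.
Unset Printing Implicit Defensive.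

Import GroupScope.

Definition group_class := forall gT : finGroupType, {group gT} -> Prop.

Record formation (F : group_class) : Prop := Formation {
  formation_isog : forall (gT rT : finGroupType) (G : {group gT}) (H : {group rT}),
      G \isog H -> F gT G -> F rT H;
  formation_quo : forall (gT : finGroupType) (G N : {group gT}),
      N <| G -> F gT G -> F _ (G / N)%G;
  formation_subdirect : forall (gT : finGroupType) (G N1 N2 : {group gT}),
      N1 <| G -> N2 <| G -> F _ (G / N1)%G -> F _ (G / N2)%G ->
      F _ (G / (N1 :&: N2))%G
}.

Definition saturated_formation (F : group_class) : Prop :=
  formation F /\
  forall (gT : finGroupType) (G : {group gT}), F _ (G / 'Phi(G))%G -> F gT G.

Definition pbool (P : Prop) : bool :=
  if excluded_middle_informative P then true else false.

(* A chief factor U/V of G (mathcomp: chief_factor G V U) is F-central if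
   (U/V) ⋊ (G / C_G(U/V)) belongs to F.  The action of G on U/V is the
   conjugation action 'Q (= 'J / V) restricted to G and U/V; C_G(U/V) is the
   kernel 'C(U/V | .) of that action, and the semidirect product is the
   external one of gproduct.v (sdprod_by) for the induced faithful action of
   G / C_G(U/V) on U/V.  The action hypothesis [nUV] always holds for a chief
   factor (lemma chief_factor_acts below); the definition does not depend on
   the proof of it (proof irrelevance). *)
Definition Fcentral (F : group_class) (gT : finGroupType) (G V U : {group gT}) : Prop :=
  forall nUV : {acts G, on group (U / V) | 'Q},
    F _ [set: sdprod_by ((<[nUV]> %% [group of 'C((U / V)%g | <[nUV]>)])%gact)]%G.

Lemma chief_factor_acts (gT : finGroupType) (G V U : {group gT}) :
  chief_factor G V U -> {acts G, on group (U / V) | 'Q}.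
Proof.
case/andP=> /maxgroupP[/andP[_ nVG] _] /andP[_ nUG].
by split; [apply: actsQ | apply: quotientS; apply: subsetT].
Qed.

Definition Fhyper_sub (F : group_class) (gT : finGroupType) (G N : {group gT}) : Prop :=
  N <| G /\
  forall U V : {group gT}, chief_factor G V U -> U \subset N -> Fcentral F G V U.

Definition ZF (F : group_class) (gT : finGroupType) (G : {group gT}) : {set gT} :=
  << \bigcup_(N : {group gT} | pbool (Fhyper_sub F G N)) N >>.

(* Main.v *)
Require Import Defs.
From HB Require Import structures.
From Stdlib Require Import ClassicalEpsilon.
From mathcomp Require Import all_boot all_fingroup all_solvable.
Set Implicit Arguments. Unset Strict Implicit. Unset Printing Implicit Defensive.
Import GroupScope.

Section H.
Variables (gT : finGroupType) (G U V : {group gT}) (nUV : {acts G, on group (U / V) | 'Q}).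

Lemma astab_chief : 'C((U / V)%g | <[nUV]>) = G :&: 'C(U / V | 'Q).
Proof. by rewrite astab_actby setIid. Qed.

Lemma norm_chief : G \subset 'N('C((U / V)%g | <[nUV]>)).
Proof.
apply: subset_trans (astab_norm _ _); rewrite astabs_actby setIid subsetI subxx /=.
by case: nUV.
Qed.

Lemma gacent_chief : 'C_(|<[nUV]>)('C((U / V)%g | <[nUV]>)) = U / V.
Proof.
rewrite gacentE; last by rewrite astab_chief subsetIl.
apply/setP=> x; rewrite inE; apply: andb_idr => Ux.
apply/afixP=> a Ca; exact: astab_act Ca Ux.
Qed.
End H.

Lemma inCQ (gT : finGroupType) (U V : {group gT}) g :
  U \subset 'N(V) -> g \in 'N(V) ->
  (g \in 'C(U / V | 'Q)) = [forall u in U, [~ u, g] \in V].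
Proof.
move=> nVU nVg; rewrite astabQR // inE nVg /=.
apply/idP/forall_inP => [sub u Uu | H].
  rewrite -groupV invg_comm; apply: (subsetP sub); apply: mem_commg; rewrite ?set11 //.
rewrite gen_subG; apply/subsetP=> _ /imset2P[x u /set1P -> Uu ->].
by rewrite -groupV invg_comm H.
Qed.
Lemma sdprod_by_isog (aT1 rT1 aT2 rT2 : finGroupType) (D1 : {group aT1})
  (R1 : {group rT1}) (D2 : {group aT2}) (R2 : {group rT2})
  (to1 : groupAction D1 R1) (to2 : groupAction D2 R2)
  (fR : {morphism R1 >-> rT2}) (fD : {morphism D1 >-> aT2}) :
  'injm fR -> 'injm fD -> fR @* R1 = R2 -> fD @* D1 = D2 ->
  {in R1 & D1, forall x a, fR (to1 x a) = to2 (fR x) (fD a)} ->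
  [set: sdprod_by to1] \isog [set: sdprod_by to2].
Proof.
move=> injR injD imR imD cmp.
have sR : R1 \subset fR @*^-1 R2.
  by apply/subsetP=> x Rx; rewrite !inE Rx -imR mem_morphim.
have sD : D1 \subset fD @*^-1 D2.
  by apply/subsetP=> x Dx; rewrite !inE Dx -imD mem_morphim.
pose fH := restrm sR (sdpair1 to2 \o fR).
pose fK := restrm sD (sdpair2 to2 \o fD).
have actf : {in R1 & D1, morph_act to1 'J fH fK}.
  move=> x a Rx Da /=.
  rewrite /fH /fK /restrm /= cmp // sdpair_act //.
    by rewrite -imR mem_morphim.
  by rewrite -imD mem_morphim.
apply/isogP; exists (xsdprod_morphism actf).
  rewrite injm_xsdprodm; apply/and3P; split.
  - by rewrite ker_restrm ker_comp (trivgP (injm_sdpair1 to2)) -kerE (trivgP injR) subsetIr.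
  - by rewrite ker_restrm ker_comp (trivgP (injm_sdpair2 to2)) -kerE (trivgP injD) subsetIr.
  rewrite !morphim_restrm !setIid !morphim_comp imR imD.
  by rewrite im_sdpair_TI.
rewrite im_xsdprodm !morphim_restrm !setIid !morphim_comp imR imD.
by rewrite im_sdpair.
Qed.

Lemma chiefP (gT : finGroupType) (G V U : {group gT}) :
  chief_factor G V U -> [/\ V \subset U, G \subset 'N(V), U \subset G & G \subset 'N(U)].
Proof.
case/andP=> /maxgroupP[/andP[/andP[sVU _] nVG] _] /andP[sUG nUG].
by split.
Qed.

Lemma Fcentral_isog (gT : finGroupType) (G1 G2 U1 V1 U2 V2 : {group gT})
  (n1 : {acts G1, on group (U1 / V1) | 'Q})
  (n2 : {acts G2, on group (U2 / V2) | 'Q}) :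
  chief_factor G1 V1 U1 -> chief_factor G2 V2 U2 ->
  G1 \subset G2 -> U1 \subset U2 -> U1 :&: V2 \subset V1 -> V1 \subset V2 ->
  U2 \subset U1 * V2 ->
  G2 \subset G1 * 'C((U2 / V2)%g | <[n2]>) ->
  [set: sdprod_by ((<[n1]> %% [group of 'C((U1 / V1)%g | <[n1]>)])%gact)]
    \isog
  [set: sdprod_by ((<[n2]> %% [group of 'C((U2 / V2)%g | <[n2]>)])%gact)].
Proof.
move=> /chiefP[sVU1 nVG1 sUG1 nUG1] /chiefP[sVU2 nVG2 sUG2 nUG2].
move=> sG12 sU12 tiUV sV12 sU21 sG21.
set C1 := 'C((U1 / V1)%g | <[n1]>).
set C2 := 'C((U2 / V2)%g | <[n2]>).
have sCG1 : C1 \subset G1 by rewrite /C1 astab_chief subsetIl.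
have sCG2 : C2 \subset G2 by rewrite /C2 astab_chief subsetIl.
have nCG1 : G1 \subset 'N(C1) by apply: norm_chief.
have nCG2 : G2 \subset 'N(C2) by apply: norm_chief.
have C1E : forall g, g \in G1 -> (g \in C1) = [forall u in U1, [~ u, g] \in V1].
  move=> g Gg; rewrite /C1 astab_chief inE Gg /= inCQ //.
    exact: subset_trans sUG1 nVG1.
  exact: subsetP nVG1 g Gg.
have C2E : forall g, g \in G2 -> (g \in C2) = [forall u in U2, [~ u, g] \in V2].
  move=> g Gg; rewrite /C2 astab_chief inE Gg /= inCQ //.
    exact: subset_trans sUG2 nVG2.
  exact: subsetP nVG2 g Gg.
have sC12 : C1 \subset C2.
  apply/subsetP=> g Cg; have G1g := subsetP sCG1 g Cg.
  have G2g := subsetP sG12 g G1g.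
  rewrite C2E //; apply/forall_inP=> w /(subsetP sU21) /mulsgP[u v Uu Vv ->].
  rewrite commMgJ groupM //.
    rewrite groupJ //; apply: (subsetP sV12).
    by move: Cg; rewrite C1E // => /forall_inP; apply.
  by rewrite commgEl groupM ?groupV // memJ_norm // (subsetP nVG2).
have sC21 : G1 :&: C2 \subset C1.
  apply/subsetP=> g /setIP[G1g Cg]; have G2g := subsetP sG12 g G1g.
  rewrite C1E //; apply/forall_inP=> u Uu; apply: (subsetP tiUV).
  rewrite inE; apply/andP; split.
    by rewrite commgEl groupM ?groupV // memJ_norm // (subsetP nUG1).
  by move: Cg; rewrite C2E // => /forall_inP; apply; apply: (subsetP sU12).
have nV2U1 : U1 \subset 'N(V2).
  exact: subset_trans sU12 (subset_trans sUG2 nVG2).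
have nV1U1 : U1 \subset 'N(V1) by exact: subset_trans sUG1 nVG1.
pose fr := restrm nV2U1 (coset V2).
have kR : 'ker (coset_morphism V1) \subset 'ker fr.
  by rewrite ker_coset ker_restrm ker_coset subsetI sVU1 sV12.
pose ffR := factm_morphism kR nV1U1.
have sR1 : 'C_(|<[n1]>)(C1) \subset U1 / V1 by rewrite gacent_chief.
pose fR := restrm_morphism sR1 ffR.
have nC2G1 : G1 \subset 'N(C2) by exact: subset_trans sG12 nCG2.
pose fd := restrm nC2G1 (coset C2).
have kD : 'ker (coset_morphism C1) \subset 'ker fd.
  by rewrite ker_coset ker_restrm ker_coset subsetI sCG1 sC12.
pose fD := factm_morphism kD nCG1.
apply: (@sdprod_by_isog _ _ _ _ _ _ _ _ _ _ fR fD).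
- apply: injm_restrm; apply/injm_factmP.
  rewrite ker_coset ker_restrm ker_coset; apply/eqP; rewrite eqEsubset tiUV.
  by rewrite subsetI sVU1 sV12.
- apply/injm_factmP.
  rewrite ker_coset ker_restrm ker_coset; apply/eqP; rewrite eqEsubset sC21.
  by rewrite subsetI sCG1 sC12.
- rewrite morphim_restrm setIid /= gacent_chief.
  rewrite [U1 / V1]/quotient morphim_factm morphim_restrm setIid gacent_chief.
  have -> : U2 :=: U1 * V2.
    apply/eqP; rewrite eqEsubset sU21 mul_subG //.
  by rewrite quotientMidr.
- rewrite /= morphim_factm /fd morphim_restrm setIid.
  have -> : G2 :=: G1 * C2.
    apply/eqP; rewrite eqEsubset sG21 mul_subG //.
  by rewrite quotientMidr.
have fRE : forall y, y \in U1 -> fR (coset V1 y) = coset V2 y.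
  move=> y Uy; change (ffR (coset V1 y) = coset V2 y).
  exact: (factmE kR nV1U1 Uy).
have fDE : forall y, y \in G1 -> fD (coset C1 y) = coset C2 y.
  by move=> y Gy; apply: (factmE kD nCG1 Gy).
move=> x a Rx Da.
have Rx' : x \in U1 / V1 by rewrite -(gacent_chief n1).
case/morphimP: Rx' => u Nu Uu ->{x Rx}.
case/morphimP: Da => g Ng Gg ->{a}.
have G2g := subsetP sG12 g Gg.
have U2u := subsetP sU12 u Uu.
have Uug : u ^ g \in U1 by rewrite memJ_norm // (subsetP nUG1).
rewrite modgactE ?subxx //; last by rewrite inE Gg (subsetP nCG1).
rewrite actbyE ?mem_quotient //.
rewrite qactJ (subsetP nVG1) // -morphJ //; last exact: (subsetP nVG1).
rewrite fRE // fRE // fDE //.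
rewrite modgactE ?subxx //; last by rewrite inE G2g (subsetP nCG2).
rewrite actbyE ?mem_quotient //.
rewrite qactJ (subsetP nVG2) // -morphJ //.
  exact: (subsetP nV2U1).
exact: (subsetP nVG2).
Qed.

Lemma Fcentral_transfer (F : group_class) (hF : formation F) (gT : finGroupType)
  (G1 G2 U1 V1 U2 V2 : {group gT}) :
  chief_factor G1 V1 U1 -> chief_factor G2 V2 U2 ->
  G1 \subset G2 -> U1 \subset U2 -> U1 :&: V2 \subset V1 -> V1 \subset V2 ->
  U2 \subset U1 * V2 ->
  (forall n2 : {acts G2, on group (U2 / V2) | 'Q},
     G2 \subset G1 * 'C((U2 / V2)%g | <[n2]>)) ->
  (Fcentral F G1 V1 U1 <-> Fcentral F G2 V2 U2).
Proof.
move=> c1 c2 sG sU ti sV sU' sC.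
have n1 := chief_factor_acts c1; have n2 := chief_factor_acts c2.
split=> [FF n | FF n].
  apply: (formation_isog hF) (FF n1).
  exact: Fcentral_isog c1 c2 sG sU ti sV sU' (sC n).
apply: (formation_isog hF) (FF n2).
rewrite isog_sym; exact: Fcentral_isog c1 c2 sG sU ti sV sU' (sC n2).
Qed.

Lemma chief_cap (gT : finGroupType) (T K H X : {group gT}) :
  chief_factor T K H -> X <| T -> ~~ (H :&: X \subset K) ->
  chief_factor T (K :&: X) (H :&: X) /\ (H :&: X) * K = H.
Proof.
move=> cf nsXT nsub; have cf' := cf.
case/andP: cf' => /maxgroupP[/andP[pKH nKT] maxK] nsHT.
have sKH := proper_sub pKH.
have [sXT nXT] := andP nsXT; have [sHT nHT] := andP nsHT.
have nKHX : H :&: X \subset 'N(K).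
  exact: subset_trans (subsetIl _ _) (subset_trans sHT nKT).
have eqH : (H :&: X) * K = H.
  have gr : group_set ((H :&: X) * K).
    by rewrite -(norm_joinEl nKHX) groupP.
  pose L := Group gr.
  have sLH : L \subset H by rewrite mul_subG ?subsetIl.
  have sKL : K \subset L by rewrite mulG_subr.
  have nLT : T \subset 'N(L).
    by rewrite /= -(norm_joinEl nKHX) normsY ?normsI.
  have [pLH | ] := boolP (L \proper H).
    have := maxK L; rewrite pLH nLT => /(_ isT sKL) eqLK.
    have sHXL : H :&: X \subset L by exact: mulG_subl.
    by case/negP: nsub; rewrite -eqLK.
  by rewrite properEneq sLH andbT negbK => /eqP.
split=> //.
apply/andP; split; last exact: normalI.
apply/maxgroupP; split.
  rewrite normsI // andbT properEneq setSI // andbT.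
  apply: contra nsub => /eqP <-; exact: subsetIl.
move=> W /andP[pW nWT] sKXW.
have sWHX := proper_sub pW.
have sWH : W \subset H by apply: subset_trans sWHX (subsetIl _ _).
have sWX : W \subset X by apply: subset_trans sWHX (subsetIr _ _).
have nKW : W \subset 'N(K) by apply: subset_trans sWH (subset_trans sHT nKT).
have gr : group_set (K * W) by rewrite -(norm_joinEr nKW) groupP.
pose L := Group gr.
have sLH : L \subset H by rewrite mul_subG.
have sKL : K \subset L by rewrite mulG_subl.
have nLT : T \subset 'N(L) by rewrite /= -(norm_joinEr nKW) normsY.
have [pLH | ] := boolP (L \proper H).
  have := maxK L; rewrite pLH nLT => /(_ isT sKL) eqLK.
  apply/eqP; rewrite eqEsubset sKXW andbT subsetI sWX andbT.
  have sWL : W \subset L by exact: mulG_subr.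
  by apply: subset_trans sWL _; rewrite eqLK.
rewrite properEneq sLH andbT negbK => /eqP eqLH.
have : H :&: X \subset W.
  have -> : gval H = K * W by rewrite -eqLH.
  by rewrite setIC -group_modr // mul_subG // setIC.
by move=> sHXW; case/negP: (proper_subn pW).
Qed.

Lemma chief_mul (gT : finGroupType) (T K H X : {group gT}) :
  chief_factor T K H -> X <| T -> H :&: X \subset K ->
  chief_factor T (K <*> X)%G (H <*> X)%G /\ H :&: (K <*> X) \subset K.
Proof.
move=> cf nsXT sHXK; have cf' := cf.
case/andP: cf' => /maxgroupP[/andP[pKH nKT] maxK] nsHT.
have sKH := proper_sub pKH.
have [sXT nXT] := andP nsXT; have [sHT nHT] := andP nsHT.
have nXK : K \subset 'N(X) by apply: subset_trans (subset_trans sKH sHT) nXT.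
have nXH : H \subset 'N(X) by apply: subset_trans sHT nXT.
have eKX : K <*> X = K * X by rewrite norm_joinEl.
have eHX : H <*> X = H * X by rewrite norm_joinEl.
have tiH : H :&: (K <*> X) \subset K.
  by rewrite eKX setIC -group_modl // mul_subG // setIC.
split=> //.
apply/andP; split; last by apply: normalY.
apply/maxgroupP; split.
  rewrite normsY // andbT properEneq; apply/andP; split; last first.
    by rewrite genS // setSU.
  apply/negP => /eqP eq; case/negP: (proper_subn pKH).
  apply: subset_trans tiH.
  have sHj : H \subset (K <*> X)%G by rewrite eq joing_subl.
  by rewrite subsetI subxx.
move=> W /andP[pW nWT] sKXW.
have sWHX := proper_sub pW.
have sXW : X \subset W by apply: subset_trans (joing_subr _ _) sKXW.
have sKW : K \subset W by apply: subset_trans (joing_subl _ _) sKXW.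
have nL : T \subset 'N(W :&: H) by rewrite normsI.
have [pL | ] := boolP ((W :&: H)%G \proper H).
  have := maxK (W :&: H)%G; rewrite pL nL => /(_ isT).
  rewrite subsetI sKW sKH => /(_ isT) eqL.
  apply/eqP; rewrite eqEsubset sKXW andbT.
  have -> : gval W = W :&: (H <*> X) by apply/esym/setIidPl.
  rewrite eHX -group_modr //.
  have -> : W :&: H = K by rewrite -[RHS]/(gval (K)) -eqL.
  by rewrite -eKX.
rewrite properEneq subsetIr andbT negbK => /eqP eqL.
have sHW : H \subset W by rewrite -eqL /= subsetIl.
have : H <*> X \subset W by rewrite join_subG sHW.
by move=> sHXW; case/negP: (proper_subn pW).
Qed.

Lemma Fhyper_join (F : group_class) (hF : formation F) (gT : finGroupType)
  (T N1 N2 : {group gT}) :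
  Fhyper_sub F T N1 -> Fhyper_sub F T N2 -> Fhyper_sub F T (N1 <*> N2)%G.
Proof.
move=> [nsN1 h1] [nsN2 h2]; split; first exact: normalY.
move=> U V cf sU.
have [sN1T nN1T] := andP nsN1; have [sN2T nN2T] := andP nsN2.
have eN : N1 <*> N2 = N1 * N2 by rewrite norm_joinEl // (subset_trans sN1T nN2T).
have Cc : forall (A B : {group gT}) (n : {acts T, on group (A / B) | 'Q}),
    T \subset T * 'C((A / B)%g | <[n]>) by move=> A B n; apply: mulG_subl.
have [sUN | nsub] := boolP (U :&: N1 \subset V).
  have [cf2 ti2] := chief_mul cf nsN1 sUN.
  have nsub2 : ~~ ((U <*> N1)%G :&: N2 \subset (V <*> N1)%G).
    apply/negP => s; case/andP: cf2 => /maxgroupP[/andP[p2 _] _] _.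
    case/negP: (proper_subn p2).
    have sHX : U <*> N1 \subset N1 * N2.
      by rewrite -eN join_subG sU joing_subl.
    change (U <*> N1 \subset V <*> N1).
    move: s; change (U <*> N1 :&: N2 \subset V <*> N1 -> U <*> N1 \subset V <*> N1) => s.
    rewrite -(setIidPl sHX) setIC -group_modl; last exact: joing_subr.
    rewrite mul_subG //; first exact: joing_subr.
    by rewrite setIC.
  have [cf3 e3] := chief_cap cf2 nsN2 nsub2.
  have F3 := h2 _ _ cf3 (subsetIr _ _).
  have F2 : Fcentral F T (V <*> N1)%G (U <*> N1)%G.
    apply: (proj1 (Fcentral_transfer hF cf3 cf2 _ _ _ _ _ _)) F3 => //.
    - exact: subsetIl.
    - by apply/subsetP=> x /[!inE] /andP[/andP[a b] c]; rewrite c b.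
    - exact: subsetIl.
    - by rewrite /= e3.
  apply: (proj2 (Fcentral_transfer hF cf cf2 _ _ _ _ _ _)) F2 => //.
  - exact: joing_subl.
  - exact: joing_subl.
  - have nUN1 : U \subset 'N(N1).
      by case/andP: cf => _ /andP[sUT _]; apply: subset_trans sUT nN1T.
    by rewrite /= norm_joinEl // mulgS // joing_subr.
have [cf1 e1] := chief_cap cf nsN1 nsub.
have F1 := h1 _ _ cf1 (subsetIr _ _).
apply: (proj1 (Fcentral_transfer hF cf1 cf _ _ _ _ _ _)) F1 => //.
- exact: subsetIl.
- by apply/subsetP=> x /[!inE] /andP[/andP[a b] c]; rewrite c b.
- exact: subsetIl.
- by rewrite /= e1.
Qed.

Lemma pboolP (Q : Prop) : pbool Q = true <-> Q.
Proof. by rewrite /pbool; case: excluded_middle_informative. Qed.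

Lemma ZF_hyper (F : group_class) (hF : formation F) (gT : finGroupType)
  (T : {group gT}) :
  exists M : {group gT}, Fhyper_sub F T M /\ ZF F T = M.
Proof.
pose P := fun N : {group gT} => pbool (Fhyper_sub F T N).
have P1 : P 1%G.
  apply/pboolP; split; first exact: normal1.
  move=> U V /andP[/maxgroupP[/andP[pVU _] _] _] sU1.
  have := proper_card (proper_sub_trans pVU sU1).
  by rewrite cards1 ltnS leqNgt cardG_gt0.
case: (@arg_maxnP _ 1%G P (fun N => #|N|) P1) => M PM maxM.
have hM := proj1 (pboolP _) PM.
have subM : forall N : {group gT}, P N -> N \subset M.
  move=> N PN; have hN := proj1 (pboolP _) PN.
  have PNM : P (N <*> M)%G by apply/pboolP; apply: Fhyper_join.
  have le := maxM _ PNM.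
  have /eqP e : (M :==: N <*> M) by rewrite eqEcard joing_subr; exact: le.
  by rewrite e joing_subl.
exists M; split=> //; apply/eqP; rewrite eqEsubset; apply/andP; split.
  by rewrite gen_subG; apply/bigcupsP => N PN; apply: subM.
have s := @bigcup_sup _ _ M P (fun N : {group gT} => gval N) PM.
exact: subset_trans s (sub_gen _).
Qed.

Unset Implicit Arguments.

Theorem lemma3p3 (F : group_class) (hF : saturated_formation F)
  (gT : finGroupType) (p : nat) (G P T : {group gT}) :
  prime p -> p.-group P -> P <| G -> T \subset G -> P * T = G ->
  P :&: ZF F T <| P ->
  P :&: ZF F T \subset ZF F G.
Proof.
move=> pr_p pP nsPG sTG ePT nsZP.
have fF := hF.1.
have [M [hM eZ]] := ZF_hyper fF T.
rewrite eZ in nsZP *.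
have [nsMT hypM] := hM.
have [sPG nPG] := andP nsPG; have [sMT nMT] := andP nsMT.
have nPT : T \subset 'N(P) by apply: subset_trans sTG nPG.
have nZG : G \subset 'N(P :&: M).
  rewrite -ePT mul_subG //; first exact: normal_norm nsZP.
  by rewrite normsI.
have nsZG : (P :&: M)%G <| G.
  by rewrite /normal nZG andbT (subset_trans (subsetIl _ _) sPG).
have hZ : Fhyper_sub F G (P :&: M)%G.
  split=> // U V cf sUZ.
  have cf' := cf.
  case/andP: cf' => /maxgroupP[/andP[pVU _] maxV] _.
  have [sVU nVG sUG nUG] := chiefP cf.
  have sUP : U \subset P by apply: subset_trans sUZ (subsetIl _ _).
  have sUM : U \subset M by apply: subset_trans sUZ (subsetIr _ _).
  have nVP : P \subset 'N(V) by apply: subset_trans sPG nVG.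
  have nVU : U \subset 'N(V) by apply: subset_trans sUG nVG.
  have nUP : P \subset 'N(U) by apply: subset_trans sPG nUG.
  have sRV : [~: U, P] \subset V.
    have ntUV : U / V != 1 by rewrite quotient_neq1 // /normal sVU.
    have := nil_comm_properl (quotient_nil V (pgroup_nil pP)) (quotientS V sUP) ntUV
      (A := P / V).
    rewrite subsetI subxx quotient_norms // => /(_ isT).
    rewrite -quotientR // => pR.
    have sRU : [~: U, P] \subset U by rewrite commg_subl.
    have nVR : [~: U, P] \subset 'N(V) by apply: subset_trans sRU nVU.
    pose L := ([~: U, P] <*> V)%G.
    have sLU : L \subset U by rewrite join_subG sRU.
    have sVL : V \subset L by exact: joing_subr.
    have nLG : G \subset 'N(L) by rewrite normsY // normsR.
    have [pLU | ] := boolP (L \proper U).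
      have := maxV L; rewrite pLU nLG => /(_ isT sVL) eLV.
      have sLV : L \subset V by rewrite eLV.
      exact: subset_trans (joing_subl _ _) sLV.
    rewrite properEneq sLU andbT negbK => /eqP eLU.
    have : [~: U, P] / V = U / V.
      rewrite -[[~: U, P] / V]quotientYidr //.
      have e2 : [~: U, P] <*> V = U := eLU.
      by rewrite e2.
    by move=> e; rewrite e properxx in pR.
  have cfT : chief_factor T V U.
    apply/andP; split; last first.
      by rewrite /normal (subset_trans sUM sMT) (subset_trans sTG nUG).
    apply/maxgroupP; split.
      by apply/andP; split => //; apply: subset_trans sTG nVG.
    move=> W /andP[pWU nWT] sVW.
    apply: maxV => //; rewrite pWU /= -ePT mul_subG //.
    rewrite -commg_subl; apply: subset_trans sVW.
    by apply: subset_trans sRV; rewrite commSg // proper_sub.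
  have FT := hypM U V cfT sUM.
  apply: (proj1 (Fcentral_transfer fF cfT cf sTG (subxx _) (subsetIr _ _) (subxx _) _ _)) FT.
    exact: mulG_subl.
  move=> n2.
  have sGTP : G \subset T * P by rewrite -ePT (normC nPT).
  apply: subset_trans sGTP _; rewrite mulgS //.
  by rewrite astab_chief subsetI sPG /= sub_astabQR // commGC.
have PZ : pbool (Fhyper_sub F G (P :&: M)%G) by apply/pboolP.
have s := @bigcup_sup _ _ (P :&: M)%G (fun N : {group gT} => pbool (Fhyper_sub F G N))
  (fun N : {group gT} => gval N) PZ.
exact: subset_trans s (sub_gen _).
Qed.
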